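(* Let $f,g_1,\dots,g_m:\mathbb{R}^n\to\mathbb{R}$ be twice continuously differentiable convex functions on $\mathbb{R}^n_+$, $g=\mathrm{col}(g_1,\dots,g_m)$, $\bar n=n+m$, $\phi(x,y)=\mathrm{col}\big(\nabla f(x)+\sum_{i=1}^m y_i\nabla g_i(x),\ -g(x)\big)$ on $\mathbb{R}^{\bar n}_+$, and define $\psi:\mathbb{R}^{\bar n+1}_{++}\to\mathbb{R}^{\bar n+1}$ by $\psi(\bar x,\tau)=\mathrm{col}\big(\tau\phi(\bar x/\tau),\ -\bar x^\top\phi(\bar x/\tau)\big)$. Then the Jacobian $\nabla\psi(\hat x)$ is positive semidefinite (i.e. $d^\top\nabla\psi(\hat x)d\ge0$ for all $d$) for every $\hat x\in\mathbb{R}^{\bar n+1}_{++}$. Furthermore, $\psi$ is a continuous monotone mapping on $\mathbb{R}^{\bar n+1}_{++}$, i.e. $(\hat x^1-\hat x^2)^\top(\psi(\hat x^1)-\psi(\hat x^2))\ge0$ for all $\hat x^1,\hat x^2\in\mathbb{R}^{\bar n+1}_{++}$.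
   Context: $\mathbb{R}^{p}_{++}$ denotes the set of vectors with all components strictly positive. *)

(* Defs.v *)
From HB Require Import structures.
From mathcomp Require Import all_boot all_order all_algebra.
From mathcomp Require Import all_classical all_reals all_analysis.
Set Implicit Arguments. Unset Strict Implicit. Unset Printing Implicit Defensive.
Import Order.TTheory GRing.Theory Num.Theory.
Import numFieldNormedType.Exports.
Local Open Scope ring_scope.

Section Defs.
Variable R : realType.

Definition partial (n : nat) (i : 'I_n) (f : 'rV[R]_n -> R) (x : 'rV[R]_n) : R :=
  derive f x (delta_mx 0 i).

Definition grad (n : nat) (f : 'rV[R]_n -> R) (x : 'rV[R]_n) : 'rV[R]_n :=
  \row_i partial i f x.

Definition C2 (n : nat) (f : 'rV[R]_n -> R) : Prop :=
  (forall x, differentiable f x) /\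
  (forall i x, differentiable (partial i f) x) /\
  (forall i j, continuous (partial j (partial i f))).

Definition nonneg_orthant (k : nat) (x : 'rV[R]_k) : Prop := forall i, 0 <= x 0 i.
Definition pos_orthant (k : nat) (x : 'rV[R]_k) : Prop := forall i, 0 < x 0 i.

Definition convex_on_nonneg (n : nat) (f : 'rV[R]_n -> R) : Prop :=
  forall x y (t : R), nonneg_orthant x -> nonneg_orthant y -> 0 <= t -> t <= 1 ->
    f (t *: x + (1 - t) *: y) <= t * f x + (1 - t) * f y.

Definition phi (n m : nat) (f : 'rV[R]_n -> R) (g : 'I_m -> 'rV[R]_n -> R)
    (z : 'rV[R]_(n + m)) : 'rV[R]_(n + m) :=
  let x := lsubmx z in let y := rsubmx z in
  row_mx (grad f x + \sum_(i < m) y 0 i *: grad (g i) x) (- \row_i g i x).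

Definition psi (n m : nat) (f : 'rV[R]_n -> R) (g : 'I_m -> 'rV[R]_n -> R)
    (xh : 'rV[R]_(n + m + 1)) : 'rV[R]_(n + m + 1) :=
  let xb := lsubmx xh in let tau := rsubmx xh 0 0 in
  let p := phi f g (tau^-1 *: xb) in
  row_mx (tau *: p) (\row_(j < 1) - \sum_(i < n + m) xb 0 i * p 0 i).

Definition dotv (k : nat) (u v : 'rV[R]_k) : R := \sum_(i < k) u 0 i * v 0 i.

End Defs.

(* Main.v *)
Require Import Defs.
From HB Require Import structures.
From mathcomp Require Import all_boot all_order all_algebra.
From mathcomp Require Import all_classical all_reals all_analysis.
From mathcomp Require Import ring lra.
Import Order.TTheory GRing.Theory Num.Theory.
Import numFieldNormedType.Exports.
Local Open Scope ring_scope.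
Section S.
Variable R : realType.
Variable V : normedModType R.
Implicit Types (h k : V -> R) (x : V).
Lemma dsD h k x : differentiable h x -> differentiable k x -> differentiable (fun y => h y + k y) x.
Proof. exact: differentiableD. Qed.
Lemma dsM h k x : differentiable h x -> differentiable k x -> differentiable (fun y => h y * k y) x.
Proof. exact: differentiableM. Qed.
Lemma dsN h x : differentiable h x -> differentiable (fun y => - h y) x.
Proof. exact: differentiableN. Qed.
Lemma dsS p (F : 'I_p -> V -> R) x : (forall i, differentiable (F i) x) -> differentiable (fun y => \sum_(i < p) F i y) x.
Proof. move=> H. rewrite (_ : (fun y => _) = \sum_(i < p) F i); first exact: differentiable_sum. by rewrite fct_sumE. Qed.
Lemma dsV h x : differentiable h x -> h x != 0 -> differentiable (fun y => (h y)^-1) x.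
Proof. exact: differentiableV. Qed.
Lemma diff_row p (F : V -> 'rV[R]_p) x : (forall j, differentiable (fun y => F y 0 j) x) -> differentiable F x.
Proof.
move=> H. rewrite (_ : F = \sum_(j < p) (fun y => F y 0 j *: delta_mx 0 j)).
  by apply: differentiable_sum => j; apply: differentiableZl.
by apply/funext => y; rewrite fct_sumE -row_sum_delta.
Qed.
Lemma dsC a b (M : 'M[R]_(a, b)) i j : differentiable (fun y : 'M[R]_(a,b) => y i j) M.
Proof. exact: differentiable_coord. Qed.
Lemma dscomp (W : normedModType R) (G : V -> W) (h : W -> R) x :
  differentiable G x -> differentiable h (G x) -> differentiable (fun y => h (G y)) x.
Proof. exact: differentiable_comp. Qed.
Lemma diff_rowmx p q (A : V -> 'rV[R]_p) (B : V -> 'rV[R]_q) x :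
  differentiable A x -> differentiable B x -> differentiable (fun y => row_mx (A y) (B y)) x.
Proof.
move=> dA dB; apply: diff_row => j.
rewrite -(fintype.splitK j); case: (fintype.split j) => j' /=.
  rewrite (_ : (fun y => _) = fun y => A y 0 j'); last by apply/funext => y; rewrite row_mxEl.
  exact: (@dscomp _ _ (fun M : 'rV[R]_p => M 0 j') _ dA (dsC _ _ _ _ _)).
rewrite (_ : (fun y => _) = fun y => B y 0 j'); last by apply/funext => y; rewrite row_mxEr.
exact: (@dscomp _ _ (fun M : 'rV[R]_q => M 0 j') _ dB (dsC _ _ _ _ _)).
Qed.
End S.
Section Main.
Variables (R : realType) (n m : nat) (f : 'rV[R]_n -> R) (g : 'I_m -> 'rV[R]_n -> R).
Hypothesis Cf : C2 f.
Hypothesis Cg : forall i, C2 (g i).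

Lemma dpart (V : normedModType R) (h : 'rV[R]_n -> R) (G : V -> 'rV[R]_n) x j : C2 h ->
  differentiable G x -> differentiable (fun y => partial j h (G y)) x.
Proof. move=> [_ [H _]] dG; exact: (@dscomp _ _ _ G (partial j h) _ dG (H _ _)). Qed.
Lemma dfun (V : normedModType R) (h : 'rV[R]_n -> R) (G : V -> 'rV[R]_n) x : C2 h ->
  differentiable G x -> differentiable (fun y => h (G y)) x.
Proof. move=> [H _] dG; exact: (@dscomp _ _ _ G h _ dG (H _)). Qed.

Lemma phi_diff z : differentiable (phi f g) z.
Proof.
rewrite /phi /=.
have dl : differentiable (lsubmx : 'rV[R]_(n + m) -> 'rV[R]_n) z by exact: differentiable_lsubmx.
have dr : differentiable (rsubmx : 'rV[R]_(n + m) -> 'rV[R]_m) z by exact: differentiable_rsubmx.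
apply: diff_rowmx; apply: diff_row => j.
  rewrite (_ : (fun y => _) = fun y => partial j f (lsubmx y) +
     \sum_(i < m) rsubmx y 0 i * partial j (g i) (lsubmx y)); last first.
    apply/funext => y; rewrite !mxE summxE; congr (_ + _); apply: eq_bigr => i _; by rewrite !mxE.
  apply: dsD; first exact: (@dpart _ _ _ _ j Cf dl).
  apply: dsS => i; apply: dsM; last exact: (@dpart _ _ _ _ j (Cg i) dl).
  exact: (@dscomp _ _ _ _ (fun M : 'rV[R]_m => M 0 i) _ dr (dsC _ _ _ _ _ _)).
rewrite (_ : (fun y => _) = fun y => - g j (lsubmx y)); last first.
  by apply/funext => y; rewrite !mxE.
by apply: dsN; exact: (@dfun _ _ _ _ (Cg j) dl).
Qed.

Definition Tf (y : 'rV[R]_(n + m + 1)) : R := rsubmx y 0 0.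
Definition Uf (y : 'rV[R]_(n + m + 1)) : 'rV[R]_(n + m) := (Tf y)^-1 *: lsubmx y.

Lemma psiE : psi f g = fun y => row_mx (Tf y *: phi f g (Uf y))
   (\row_(j < 1) - \sum_(i < n + m) lsubmx y 0 i * phi f g (Uf y) 0 i).
Proof. by []. Qed.

Lemma dTf y : differentiable Tf y.
Proof.
have dr : differentiable (rsubmx : 'rV[R]_(n + m + 1) -> 'rV[R]_1) y by exact: differentiable_rsubmx.
exact: (@dscomp _ _ _ _ (fun M : 'rV[R]_1 => M 0 0) _ dr (dsC _ _ _ _ _ _)).
Qed.

Lemma dlc y i : differentiable (fun y : 'rV[R]_(n + m + 1) => lsubmx y 0 i) y.
Proof.
have dl : differentiable (lsubmx : 'rV[R]_(n + m + 1) -> 'rV[R]_(n + m)) y by exact: differentiable_lsubmx.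
exact: (@dscomp _ _ _ _ (fun M : 'rV[R]_(n + m) => M 0 i) _ dl (dsC _ _ _ _ _ _)).
Qed.

Lemma psi_diff xh : Tf xh != 0 -> differentiable (psi f g) xh.
Proof.
move=> T0.
have dU : differentiable Uf xh.
  apply: diff_row => i.
  rewrite (_ : (fun y => _) = fun y => (Tf y)^-1 * lsubmx y 0 i); last first.
    by apply/funext => y; rewrite /Uf mxE.
  apply: dsM; last exact: dlc.
  exact: dsV (dTf _) T0.
have dPU : differentiable (fun y => phi f g (Uf y)) xh.
  exact: differentiable_comp dU (phi_diff _).
have dPc : forall i, differentiable (fun y => phi f g (Uf y) 0 i) xh.
  move=> i; exact: (@dscomp _ _ _ _ (fun M : 'rV[R]_(n + m) => M 0 i) _ dPU (dsC _ _ _ _ _ _)).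
rewrite psiE; apply: diff_rowmx; apply: diff_row => j.
  rewrite (_ : (fun y => _) = fun y => Tf y * phi f g (Uf y) 0 j); last first.
    by apply/funext => y; rewrite mxE.
  exact: dsM (dTf _) (dPc j).
rewrite (_ : (fun y => _) = fun y => - \sum_(i < n + m) lsubmx y 0 i * phi f g (Uf y) 0 i); last first.
  by apply/funext => y; rewrite mxE.
apply: dsN; apply: dsS => i; exact: dsM (dlc _ _) (dPc i).
Qed.
End Main.
Arguments Tf {R n m}.
Arguments Uf {R n m}.
Arguments psiE {R n m f g}.
Arguments psi_diff {R n m f g}.
Arguments phi_diff {R n m f g}.

Section Alg.
Variable R : realType.

Lemma dotvC k (u v : 'rV[R]_k) : dotv u v = dotv v u.
Proof. by apply: eq_bigr => i _; rewrite mulrC. Qed.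
Lemma dotvDl k (u v w : 'rV[R]_k) : dotv (u + v) w = dotv u w + dotv v w.
Proof. by rewrite /dotv -big_split; apply: eq_bigr => i _; rewrite mxE mulrDl. Qed.
Lemma dotvNl k (u w : 'rV[R]_k) : dotv (- u) w = - dotv u w.
Proof. by rewrite /dotv -sumrN; apply: eq_bigr => i _; rewrite mxE mulNr. Qed.
Lemma dotvBl k (u v w : 'rV[R]_k) : dotv (u - v) w = dotv u w - dotv v w.
Proof. by rewrite dotvDl dotvNl. Qed.
Lemma dotvZl k a (u w : 'rV[R]_k) : dotv (a *: u) w = a * dotv u w.
Proof. by rewrite /dotv mulr_sumr; apply: eq_bigr => i _; rewrite mxE mulrA. Qed.
Lemma dotvDr k (u v w : 'rV[R]_k) : dotv w (u + v) = dotv w u + dotv w v.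
Proof. by rewrite !(dotvC _ w) dotvDl. Qed.
Lemma dotvNr k (u w : 'rV[R]_k) : dotv w (- u) = - dotv w u.
Proof. by rewrite !(dotvC _ w) dotvNl. Qed.
Lemma dotvBr k (u v w : 'rV[R]_k) : dotv w (u - v) = dotv w u - dotv w v.
Proof. by rewrite !(dotvC _ w) dotvBl. Qed.
Lemma dotvZr k a (u w : 'rV[R]_k) : dotv w (a *: u) = a * dotv w u.
Proof. by rewrite !(dotvC _ w) dotvZl. Qed.
Lemma dotv_sumr k p (F : 'I_p -> 'rV[R]_k) w : dotv w (\sum_(i < p) F i) = \sum_(i < p) dotv w (F i).
Proof.
rewrite /dotv exchange_big /=; apply: eq_bigr => j _; rewrite summxE mulr_sumr.
by [].
Qed.
Lemma dotv_split p q (u v : 'rV[R]_(p + q)) :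
  dotv u v = dotv (lsubmx u) (lsubmx v) + dotv (rsubmx u) (rsubmx v).
Proof.
rewrite /dotv big_split_ord /=; congr (_ + _); apply: eq_bigr => i _; by rewrite !mxE.
Qed.

Lemma grad_dot n (h : 'rV[R]_n -> R) x v : differentiable h x ->
  dotv v (grad h x) = 'D_v h x.
Proof.
move=> dh; rewrite (deriveE _ dh) {2}(row_sum_delta v) linear_sum /dotv.
apply: eq_bigr => j _; rewrite linearZ /= -deriveE // mxE.
by [].
Qed.

Lemma conv_grad n (h : 'rV[R]_n -> R) x y : C2 h -> convex_on_nonneg h ->
  nonneg_orthant x -> nonneg_orthant y -> 'D_(y - x) h x <= h y - h x.
Proof.
move=> [dh _] cvx nx ny.
have H : derivable h x (y - x) by apply: diff_derivable.
rewrite /derive; have H2 := cvg_dnbhs_at_right H. apply: (cvgr_to_le H2).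
near=> t.
have t0 : 0 < t by near: t; exact: nbhs_right_gt.
have t1 : t <= 1 by near: t; exact: nbhs_right_le.
rewrite /= (_ : t *: (y - x) + x = t *: y + (1 - t) *: x); last first.
  by rewrite scalerBr scalerBl scale1r [x - _]addrC addrA.
have := cvx y x t ny nx (ltW t0) t1.
move=> Hc.
rewrite -[X in X <= _]/(t^-1 * _) ler_pdivrMl //.
lra.
Unshelve. all: by end_near.
Qed.

Lemma grad_ineq n (h : 'rV[R]_n -> R) x y : C2 h -> convex_on_nonneg h ->
  nonneg_orthant x -> nonneg_orthant y -> h x - h y <= dotv (x - y) (grad h x).
Proof.
move=> Ch cv nx ny; have := @conv_grad _ _ x y Ch cv nx ny.
rewrite -grad_dot; last by case: Ch.
rewrite -opprB dotvNl; lra.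
Qed.

Lemma phi_mono n m (f : 'rV[R]_n -> R) (g : 'I_m -> 'rV[R]_n -> R) u1 u2 :
  C2 f -> convex_on_nonneg f ->
  (forall i, C2 (g i)) -> (forall i, convex_on_nonneg (g i)) ->
  nonneg_orthant u1 -> nonneg_orthant u2 ->
  0 <= dotv (u1 - u2) (phi f g u1 - phi f g u2).
Proof.
move=> Cf cvf Cg cvg nu1 nu2.
set x1 := lsubmx u1; set x2 := lsubmx u2; set y1 := rsubmx u1; set y2 := rsubmx u2.
have nx1 : nonneg_orthant x1 by move=> i; rewrite /x1 mxE.
have nx2 : nonneg_orthant x2 by move=> i; rewrite /x2 mxE.
have ny1 : nonneg_orthant y1 by move=> i; rewrite /y1 mxE.
have ny2 : nonneg_orthant y2 by move=> i; rewrite /y2 mxE.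
set a := fun i => dotv (x1 - x2) (grad (g i) x1).
set b := fun i => dotv (x1 - x2) (grad (g i) x2).
have E : dotv (u1 - u2) (phi f g u1 - phi f g u2) =
   dotv (x1 - x2) (grad f x1) - dotv (x1 - x2) (grad f x2) +
   \sum_(i < m) (y1 0 i * (a i - (g i x1 - g i x2)) + y2 0 i * ((g i x1 - g i x2) - b i)).
  rewrite dotv_split !linearB /= /phi !row_mxKl !row_mxKr -/x1 -/x2 -/y1 -/y2.
  rewrite !(dotvBr, dotvDr) !dotv_sumr.
  rewrite /a /b /=.
  under eq_bigr do rewrite dotvZr.
  under [X in _ - (_ + X) + _]eq_bigr do rewrite dotvZr.
  have Ey : dotv (y1 - y2) (- \row_i g i x1) - dotv (y1 - y2) (- \row_i g i x2) =
      \sum_(i < m) (y1 0 i - y2 0 i) * (g i x2 - g i x1).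
    by rewrite /dotv -sumrB; apply: eq_bigr => i _; rewrite !mxE; ring.
  rewrite Ey.
  have S : \sum_(i < m) (y1 0 i * (dotv (x1 - x2) (grad (g i) x1) - (g i x1 - g i x2)) +
       y2 0 i * (g i x1 - g i x2 - dotv (x1 - x2) (grad (g i) x2))) =
     \sum_(i < m) y1 0 i * dotv (x1 - x2) (grad (g i) x1) -
     \sum_(i < m) y2 0 i * dotv (x1 - x2) (grad (g i) x2) +
     \sum_(i < m) (y1 0 i - y2 0 i) * (g i x2 - g i x1).
    by rewrite -sumrB -big_split; apply: eq_bigr => i _ /=; ring.
  rewrite S /dotv; ring.
rewrite E; apply: addr_ge0.
  have := @grad_ineq _ _ _ _ Cf cvf nx1 nx2; have := @grad_ineq _ _ _ _ Cf cvf nx2 nx1.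
  rewrite -[x2 - x1]opprB dotvNl; lra.
apply: sumr_ge0 => i _; apply: addr_ge0; apply: mulr_ge0 => //.
  by have := @grad_ineq _ _ _ _ (Cg i) (cvg i) nx1 nx2; rewrite /a; lra.
have := @grad_ineq _ _ _ _ (Cg i) (cvg i) nx2 nx1; rewrite /b -[x2 - x1]opprB dotvNl; lra.
Qed.
Lemma dot1 (a b : 'rV[R]_1) : dotv a b = a 0 0 * b 0 0.
Proof. by rewrite /dotv big_ord1. Qed.
Lemma sub00 k (A B : 'rV[R]_k) i : (A - B) 0 i = A 0 i - B 0 i.
Proof. by rewrite !mxE. Qed.

Lemma psi_mono n m (f : 'rV[R]_n -> R) (g : 'I_m -> 'rV[R]_n -> R) x1 x2 :
  C2 f -> convex_on_nonneg f ->
  (forall i, C2 (g i)) -> (forall i, convex_on_nonneg (g i)) ->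
  pos_orthant x1 -> pos_orthant x2 ->
  0 <= dotv (x1 - x2) (psi f g x1 - psi f g x2).
Proof.
move=> Cf cvf Cg cvg px1 px2.
have Tp : forall x : 'rV[R]_(n + m + 1), pos_orthant x -> 0 < Tf x.
  by move=> x px; rewrite /Tf mxE.
have Un : forall x : 'rV[R]_(n + m + 1), pos_orthant x -> nonneg_orthant (Uf x).
  move=> x px i; rewrite /Uf mxE mxE; apply: mulr_ge0; last exact: ltW.
  by rewrite invr_ge0; apply: ltW; apply: Tp.
have xbE : forall x : 'rV[R]_(n + m + 1), pos_orthant x -> lsubmx x = Tf x *: Uf x.
  move=> x px; rewrite /Uf scalerA mulfV ?scale1r //; apply: lt0r_neq0; exact: Tp.
have Lp : forall x, lsubmx (psi f g x) = Tf x *: phi f g (Uf x) by move=> x; rewrite psiE row_mxKl.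
have Rp : forall x, rsubmx (psi f g x) 0 0 = - dotv (lsubmx x) (phi f g (Uf x)).
  by move=> x; rewrite psiE row_mxKr mxE.
have M := @phi_mono _ _ _ _ _ _ Cf cvf Cg cvg (Un _ px1) (Un _ px2).
have -> : dotv (x1 - x2) (psi f g x1 - psi f g x2) =
   Tf x1 * Tf x2 * dotv (Uf x1 - Uf x2) (phi f g (Uf x1) - phi f g (Uf x2)).
  rewrite dotv_split dot1 !linearB /= !sub00 Lp Lp Rp Rp -/(Tf x1) -/(Tf x2).
  rewrite (xbE _ px1) (xbE _ px2).
  rewrite !(dotvBl, dotvBr, dotvZl, dotvZr); ring.
by apply: mulr_ge0 => //; apply: mulr_ge0; apply: ltW; apply: Tp.
Qed.

Lemma near_pos k (xh d : 'rV[R]_k) : pos_orthant xh ->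
  \forall t \near ((0:R)^'+)%classic, pos_orthant (t *: d + xh).
Proof.
move=> px; apply: filter_forall => i.
pose e := xh 0 i / (`|d 0 i| + 1).
have e0 : 0 < e by apply: divr_gt0 => //; apply: ltr_pwDr.
have he : e * (`|d 0 i| + 1) = xh 0 i.
  by rewrite divfK //; apply: lt0r_neq0; apply: ltr_pwDr.
near=> t.
have t0 : 0 < t by near: t; exact: nbhs_right_gt.
have te : t < e by near: t; exact: nbhs_right_lt.
rewrite !mxE.
have hd : - d 0 i <= `|d 0 i| by rewrite -normrN ler_norm.
have n0 : 0 <= `|d 0 i| by [].
have h1 : t * `|d 0 i| <= e * `|d 0 i| by apply: ler_wpM2r => //; apply: ltW.
have h2 : - (t * d 0 i) <= t * `|d 0 i| by rewrite -mulrN; apply: ler_wpM2l => //; apply: ltW.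
nra.
Unshelve. all: by end_near.
Qed.

Lemma psd n m (f : 'rV[R]_n -> R) (g : 'I_m -> 'rV[R]_n -> R) xh (d : 'rV[R]_(n + m + 1)) :
  C2 f -> convex_on_nonneg f ->
  (forall i, C2 (g i)) -> (forall i, convex_on_nonneg (g i)) ->
  pos_orthant xh -> 0 <= (d *m 'J (psi f g) xh *m d^T) 0 0.
Proof.
move=> Cf cvf Cg cvg px.
have T0 : Tf xh != 0 by apply: lt0r_neq0; rewrite /Tf mxE.
have dp := psi_diff Cf Cg xh T0.
rewrite -deriveEjacobian //.
have -> : ('D_d (psi f g) xh *m d^T) 0 0 = dotv ('D_d (psi f g) xh) d.
  by rewrite mxE; apply: eq_bigr => j _; rewrite mxE.
have H : derivable (psi f g) xh d by apply: diff_derivable.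
have cd : continuous (fun w : 'rV[R]_(n + m + 1) => dotv w d).
  move=> w; apply: differentiable_continuous; apply: dsS => i; apply: dsM.
    exact: dsC.
  exact: differentiable_cst.
have H1 := cvg_dnbhs_at_right H.
have H2 := @continuous_cvg _ _ _ _ _ _ _ _ (cd _) H1.
rewrite /derive. apply: (cvgr_to_ge (H2 _)).
have NP := @near_pos _ xh d px.
near=> t.
have t0 : 0 < t by near: t; exact: nbhs_right_gt.
have pt : pos_orthant (t *: d + xh) by near: t; exact: NP.
have := @psi_mono _ _ _ _ _ _ Cf cvf Cg cvg pt px.
rewrite addrK dotvZl /= dotvZl dotvC => Ht.
apply: mulr_ge0; first by rewrite invr_ge0 ltW.
by rewrite -(pmulr_rge0 _ t0).
Unshelve. all: by end_near.
Qed.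
End Alg.

Theorem lemma7 (R : realType) (n m : nat) (f : 'rV[R]_n -> R)
    (g : 'I_m -> 'rV[R]_n -> R) :
  C2 f -> convex_on_nonneg f ->
  (forall i, C2 (g i)) -> (forall i, convex_on_nonneg (g i)) ->
  (forall xh : 'rV[R]_(n + m + 1), pos_orthant xh ->
     differentiable (psi f g) xh /\
     forall d : 'rV[R]_(n + m + 1),
       0 <= (d *m 'J (psi f g) xh *m d^T) 0 0) /\
  (forall xh : 'rV[R]_(n + m + 1), pos_orthant xh ->
     {for xh, continuous (psi f g)}) /\
  (forall x1 x2 : 'rV[R]_(n + m + 1), pos_orthant x1 -> pos_orthant x2 ->
     0 <= dotv (x1 - x2) (psi f g x1 - psi f g x2)).
Proof.
move=> Cf cvf Cg cvg.
have T0 : forall xh : 'rV[R]_(n + m + 1), pos_orthant xh -> Tf xh != 0.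
  by move=> xh px; apply: lt0r_neq0; rewrite /Tf mxE.
split; [|split].
- move=> xh px; split; first exact: psi_diff Cf Cg xh (T0 _ px).
  move=> d; exact: psd.
- move=> xh px; apply: differentiable_continuous; exact: psi_diff Cf Cg xh (T0 _ px).
- move=> x1 x2 p1 p2; exact: psi_mono.
Qed.
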